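(* Let $X$ and $Y$ be scalable monoids over a ring $R$. Then the tensor product $X\otimes Y$ is a scalable monoid over $R$.
   Context: A scalable monoid over a (unital, associative) ring $R$ is a monoid $X$ (identity $1_X$, product written $xy$) together with a map $R\times X\to X$, $(\alpha,x)\mapsto\alpha\cdot x$, such that $1\cdot x=x$, $\alpha\cdot(\beta\cdot x)=\alpha\beta\cdot x$ and $\alpha\cdot(xy)=(\alpha\cdot x)y=x(\alpha\cdot y)$. For scalable monoids $X,Y$ over $R$, define the relation $\backsim_\otimes$ on $X\times Y$ by $(x_1,y_1)\backsim_\otimes(x_2,y_2)$ iff $(\alpha\cdot x_1,\beta\cdot y_1)=(\beta\cdot x_2,\alpha\cdot y_2)$ for some $\alpha,\beta\in R$; it is an equivalence relation. Let $x\otimes y$ be the class of $(x,y)$ and $X\otimes Y=\{x\otimes y\mid x\in X,y\in Y\}$, equipped with $(x_1\otimes y_1)(x_2\otimes y_2)=x_1x_2\otimes y_1y_2$, $\lambda\cdot(x\otimes y)=(\lambda\cdot x)\otimes y$, and identity $1_X\otimes1_Y$. *)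

(* Defs.v *)
From mathcomp Require Import all_boot all_algebra.
Set Implicit Arguments. Unset Strict Implicit. Unset Printing Implicit Defensive.
Import GRing.Theory.
Local Open Scope ring_scope.

Record is_scalable_monoid (R : pzRingType) (T : Type)
    (mul : T -> T -> T) (one : T) (scale : R -> T -> T) : Prop := {
  sm_mulA : forall x y z, mul x (mul y z) = mul (mul x y) z;
  sm_mul1l : forall x, mul one x = x;
  sm_mul1r : forall x, mul x one = x;
  sm_scale1 : forall x, scale 1 x = x;
  sm_scaleA : forall a b x, scale a (scale b x) = scale (a * b) x;
  sm_scale_mull : forall a x y, scale a (mul x y) = mul (scale a x) y;
  sm_scale_mulr : forall a x y, scale a (mul x y) = mul x (scale a y)
}.

Record scalableMonoid (R : pzRingType) := ScalableMonoid {
  sm_car :> Type;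
  sm_mul : sm_car -> sm_car -> sm_car;
  sm_one : sm_car;
  sm_scale : R -> sm_car -> sm_car;
  sm_ax : is_scalable_monoid sm_mul sm_one sm_scale
}.

Section Tensor.
Variables (R : pzRingType) (X Y : scalableMonoid R).

Definition tens_rel (p q : X * Y) : Prop :=
  exists (a b : R), sm_scale a p.1 = sm_scale b q.1 /\ sm_scale b p.2 = sm_scale a q.2.

Definition tensor : Type := {C : X * Y -> Prop | exists p, C = tens_rel p}.

Definition tens (x : X) (y : Y) : tensor :=
  exist (fun C => exists p, C = tens_rel p) (tens_rel (x, y)) (ex_intro _ (x, y) erefl).

End Tensor.

(* Main.v *)
Require Import Defs.
From mathcomp Require Import all_boot all_algebra.
From Stdlib Require Import ClassicalEpsilon FunctionalExtensionality PropExtensionality ProofIrrelevance.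
Local Open Scope ring_scope.
Set Implicit Arguments. Unset Strict Implicit.

Section Aux.
Variable (R : pzRingType).

Lemma scale_comm (X : scalableMonoid R) a b (x : X) :
  sm_scale a (sm_scale b x) = sm_scale b (sm_scale a x).
Proof.
have ax := sm_ax X.
have e : forall c (z : X), sm_scale c z = sm_mul z (sm_scale c (sm_one X)).
  by move=> c z; rewrite -(sm_scale_mulr ax) (sm_mul1r ax).
have e' : forall c (z : X), sm_scale c z = sm_mul (sm_scale c z) (sm_one X).
  by move=> c z; rewrite (sm_mul1r ax).
by rewrite [sm_scale b x]e (sm_scale_mull ax) -e.
Qed.

Variables (X Y : scalableMonoid R).

Lemma rel_refl (p : X * Y) : tens_rel p p.
Proof. by exists 1, 1. Qed.

Lemma rel_sym (p q : X * Y) : tens_rel p q -> tens_rel q p.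
Proof. by case=> a [b [h1 h2]]; exists b, a; split. Qed.

Lemma rel_trans (p q r : X * Y) : tens_rel p q -> tens_rel q r -> tens_rel p r.
Proof.
have aX := sm_ax X; have aY := sm_ax Y.
case=> a [b [h1 h2]] [c [d [h3 h4]]].
exists (c * a), (d * b); split.
- rewrite -(sm_scaleA aX) h1 scale_comm h3 scale_comm (sm_scaleA aX) //.
- rewrite -(sm_scaleA aY) h2 scale_comm h4 scale_comm (sm_scaleA aY) //.
Qed.

Lemma rel_eq (p q : X * Y) : tens_rel p = tens_rel q <-> tens_rel p q.
Proof.
split.
  by move=> e; rewrite e; apply: rel_refl.
move=> h; apply: functional_extensionality => r.
apply: propositional_extensionality; split => h'.
  exact: rel_trans (rel_sym h) h'.
exact: rel_trans h h'.
Qed.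

Lemma tensor_ext (C D : tensor X Y) : proj1_sig C = proj1_sig D -> C = D.
Proof.
case: C D => [c hc] [d hd] /= e; subst d; f_equal; apply: proof_irrelevance.
Qed.

Lemma tens_eq (x x' : X) (y y' : Y) :
  tens_rel (x, y) (x', y') -> tens x y = tens x' y'.
Proof. by move=> h; apply: tensor_ext; apply/rel_eq. Qed.

Lemma tens_inj (x x' : X) (y y' : Y) :
  tens x y = tens x' y' -> tens_rel (x, y) (x', y').
Proof. by move=> e; apply/rel_eq; move: (f_equal (@proj1_sig _ _) e). Qed.

Definition rep (C : tensor X Y) : X * Y :=
  proj1_sig (constructive_indefinite_description _ (proj2_sig C)).

Lemma repK C : tens (rep C).1 (rep C).2 = C.
Proof.
apply: tensor_ext; rewrite /rep /=.
case: (constructive_indefinite_description _ _) => p e /=.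
by rewrite e; case: p {e}.
Qed.

Lemma rep_rel x y : tens_rel (rep (tens x y)) (x, y).
Proof. by move: (repK (tens x y)); case: (rep (tens x y)) => a b /= /tens_inj. Qed.

Lemma tens_ind (P : tensor X Y -> Prop) :
  (forall x y, P (tens x y)) -> forall C, P C.
Proof. by move=> h C; rewrite -(repK C). Qed.

Definition tmul (C D : tensor X Y) : tensor X Y :=
  tens (sm_mul (rep C).1 (rep D).1) (sm_mul (rep C).2 (rep D).2).

Definition tscale (l : R) (C : tensor X Y) : tensor X Y :=
  tens (sm_scale l (rep C).1) (rep C).2.

Lemma mul_compat_l (p p' : X * Y) x2 y2 : tens_rel p p' ->
  tens_rel (sm_mul p.1 x2, sm_mul p.2 y2) (sm_mul p'.1 x2, sm_mul p'.2 y2).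
Proof.
have aX := sm_ax X; have aY := sm_ax Y.
case=> a [b [h1 h2]]; exists a, b => /=.
by rewrite !(sm_scale_mull aX) !(sm_scale_mull aY) h1 h2.
Qed.

Lemma mul_compat_r (q q' : X * Y) x1 y1 : tens_rel q q' ->
  tens_rel (sm_mul x1 q.1, sm_mul y1 q.2) (sm_mul x1 q'.1, sm_mul y1 q'.2).
Proof.
have aX := sm_ax X; have aY := sm_ax Y.
case=> a [b [h1 h2]]; exists a, b => /=.
by rewrite !(sm_scale_mulr aX) !(sm_scale_mulr aY) h1 h2.
Qed.

Lemma tmulE x1 y1 x2 y2 :
  tmul (tens x1 y1) (tens x2 y2) = tens (sm_mul x1 x2) (sm_mul y1 y2).
Proof.
rewrite /tmul; apply: tens_eq.
apply: rel_trans (mul_compat_l _ _ (rep_rel x1 y1)) _ => /=.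
exact: (mul_compat_r _ _ (rep_rel x2 y2)).
Qed.

Lemma tscaleE l x y : tscale l (tens x y) = tens (sm_scale l x) y.
Proof.
rewrite /tscale; apply: tens_eq.
have aX := sm_ax X.
case: (rep_rel x y) => a [b [h1 h2]]; exists a, b => /=; split => //.
by rewrite scale_comm h1 scale_comm.
Qed.

End Aux.

Theorem proposition2p21 (R : pzRingType) (X Y : scalableMonoid R) :
  exists (mul : tensor X Y -> tensor X Y -> tensor X Y)
         (scale : R -> tensor X Y -> tensor X Y),
    (forall (x1 x2 : X) (y1 y2 : Y),
        mul (tens x1 y1) (tens x2 y2) = tens (sm_mul x1 x2) (sm_mul y1 y2)) /\
    (forall (l : R) (x : X) (y : Y), scale l (tens x y) = tens (sm_scale l x) y) /\
    is_scalable_monoid mul (tens (sm_one X) (sm_one Y)) scale.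
Proof.
have aX := sm_ax X; have aY := sm_ax Y.
exists (@tmul R X Y), (@tscale R X Y); split; first by move=> *; apply: tmulE.
split; first exact: tscaleE.
split.
- elim/tens_ind => x1 y1; elim/tens_ind => x2 y2; elim/tens_ind => x3 y3.
  by rewrite !tmulE (sm_mulA aX) (sm_mulA aY).
- by elim/tens_ind => x y; rewrite tmulE (sm_mul1l aX) (sm_mul1l aY).
- by elim/tens_ind => x y; rewrite tmulE (sm_mul1r aX) (sm_mul1r aY).
- by elim/tens_ind => x y; rewrite tscaleE (sm_scale1 aX).
- by move=> a b; elim/tens_ind => x y; rewrite !tscaleE (sm_scaleA aX).
- move=> a; elim/tens_ind => x1 y1; elim/tens_ind => x2 y2.
  by rewrite tmulE !tscaleE tmulE (sm_scale_mull aX).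
- move=> a; elim/tens_ind => x1 y1; elim/tens_ind => x2 y2.
  by rewrite tmulE !tscaleE tmulE (sm_scale_mulr aX).
Qed.
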